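(* Let $\mathbf P=UV^\top$ be the transition matrix of a Markov chain on $\{1,\dots,p\}$ with stationary distribution $\pi$ having all entries positive, where $U,V\in\mathbb R^{p\times r}$ are entrywise nonnegative with $U\mathbf 1_r=\mathbf 1_p$, $V^\top\mathbf 1_p=\mathbf 1_r$, each meta-state has an anchor state, and $\mathrm{rank}(U)=r$. Let $\mathbf H=[\mathbf h_1,\dots,\mathbf h_r]$ contain the right singular vectors of $\mathbf Q=\mathrm{diag}(\pi)\mathbf P[\mathrm{diag}(\pi)]^{-1/2}$ associated with its nonzero singular values. Then there exists a simplicial cone in $\mathbb R^r$ with $r$ extreme rays such that all rows of $\mathbf H$ are contained in this simplicial cone. Furthermore, for all anchor states $j$ of a meta-state, the $j$-th row of $\mathbf H$ lies exactly on one extreme ray of this simplicial cone.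
   Context: A state $j$ is an anchor state of meta-state $k$ if $V_{jk}>0$ and $V_{js}=0$ for all $s\neq k$. A simplicial cone in $\mathbb R^r$ with $r$ extreme rays is a set $\{\sum_{k=1}^ra_k\boldsymbol\ell_k: a_k\ge0\}$ for linearly independent $\boldsymbol\ell_1,\dots,\boldsymbol\ell_r\in\mathbb R^r$, its extreme rays being $\{a\boldsymbol\ell_k:a\ge0\}$. *)

(* Defs.v *)
From HB Require Import structures.
From mathcomp Require Import all_boot all_order all_algebra.
From mathcomp Require Import reals.
Set Implicit Arguments. Unset Strict Implicit. Unset Printing Implicit Defensive.
Import Order.TTheory GRing.Theory Num.Theory.
Local Open Scope ring_scope.

Definition stationary_dist (R : realType) (p : nat) (P : 'M[R]_p) (pi : 'rV[R]_p) : Prop :=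
  (forall j, 0 <= pi 0 j) /\ \sum_j pi 0 j = 1 /\ pi *m P = pi.

Definition anchor_state (R : realType) (p r : nat) (V : 'M[R]_(p, r)) (j : 'I_p) (k : 'I_r) : Prop :=
  0 < V j k /\ forall s, s != k -> V j s = 0.

Definition Qmat (R : realType) (p : nat) (P : 'M[R]_p) (pi : 'rV[R]_p) : 'M[R]_p :=
  diag_mx pi *m P *m diag_mx (map_mx (fun x => (Num.sqrt x)^-1) pi).

(* The columns of H are the right singular vectors of Q associated with its
   nonzero singular values: Q = W diag(sigma) H^T is a compact SVD, with
   orthonormal columns in W and H and positive singular values sigma. *)
Definition right_sing_vectors_nonzero (R : realType) (p r : nat) (Q : 'M[R]_p) (H : 'M[R]_(p, r)) : Prop :=
  exists (W : 'M[R]_(p, r)) (sigma : 'rV[R]_r),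
    W^T *m W = 1%:M /\ H^T *m H = 1%:M /\ (forall k, 0 < sigma 0 k) /\
    Q = W *m diag_mx sigma *m H^T.

Definition in_simplicial_cone (R : realType) (r : nat) (L : 'M[R]_r) (x : 'rV[R]_r) : Prop :=
  exists a : 'rV[R]_r, (forall k, 0 <= a 0 k) /\ x = a *m L.

Definition on_extreme_ray (R : realType) (r : nat) (L : 'M[R]_r) (k : 'I_r) (x : 'rV[R]_r) : Prop :=
  exists a : R, 0 <= a /\ x = a *: row k L.

(* Main.v *)
Require Import Defs.
From HB Require Import structures.
From mathcomp Require Import all_boot all_order all_algebra.
From mathcomp Require Import reals.
Import Order.TTheory GRing.Theory Num.Theory.
Local Open Scope ring_scope.

Theorem mainTheorem13 (R : realType) (p r : nat)
  (U V : 'M[R]_(p, r)) (pi : 'rV[R]_p) (H : 'M[R]_(p, r)) :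
  (forall i k, 0 <= U i k) -> (forall i k, 0 <= V i k) ->
  U *m const_mx 1 = const_mx 1 :> 'cV[R]_p ->
  V^T *m const_mx 1 = const_mx 1 :> 'cV[R]_r ->
  stationary_dist (U *m V^T) pi ->
  (forall j, 0 < pi 0 j) ->
  (forall k, exists j, anchor_state V j k) ->
  \rank U = r ->
  right_sing_vectors_nonzero (Qmat (U *m V^T) pi) H ->
  exists L : 'M[R]_r,
    row_free L /\
    (forall j : 'I_p, in_simplicial_cone L (row j H)) /\
    (forall (j : 'I_p) (k : 'I_r), anchor_state V j k ->
       exists! k' : 'I_r, on_extreme_ray L k' (row j H)).
Proof.
move=> U0 V0 _ _ _ pi0 _ _ [W [sigma [WW [HH [s0 EQ]]]]].
set d := map_mx (fun x => (Num.sqrt x)^-1) pi.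
set L := U^T *m diag_mx pi *m W *m diag_mx (map_mx (fun x => x^-1) sigma).
have EH : H = diag_mx d *m V *m L.
  have QT : (Qmat (U *m V^T) pi)^T = H *m diag_mx sigma *m W^T.
    by rewrite EQ !trmx_mul trmxK tr_diag_mx mulmxA.
  have HS : H *m diag_mx sigma = (Qmat (U *m V^T) pi)^T *m W.
    by rewrite QT -mulmxA WW mulmx1.
  have -> : H = H *m diag_mx sigma *m diag_mx (map_mx (fun x => x^-1) sigma).
    rewrite -mulmxA mulmx_diag.
    have -> : diag_mx (\row_j (sigma 0 j * (map_mx (fun x => x^-1) sigma) 0 j)) = 1%:M :> 'M[R]_r.
      apply/matrixP => i j; rewrite !mxE; case: eqP => [->|]; rewrite ?mulr0n ?mulr1n //.
      by rewrite mulfV // gt_eqF.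
    by rewrite mulmx1.
  rewrite HS /Qmat !trmx_mul !tr_diag_mx trmxK /L -/d !mulmxA.
  done.
have rowH : forall j, row j H = (d 0 j *: row j V) *m L.
  move=> j; rewrite EH row_mul; congr (_ *m _).
  by apply/rowP => k; rewrite mul_diag_mx !mxE.
have d0 : forall j, 0 < d 0 j.
  by move=> j; rewrite mxE invr_gt0 sqrtr_gt0.
have freeL : row_free L.
  rewrite /row_free eqn_leq rank_leq_row /=.
  have := mxrankM_maxr (diag_mx d *m V) L; rewrite -EH => h1.
  apply: leq_trans h1.
  have := mxrankM_maxr H^T H; rewrite HH mxrank1.
  done.
exists L; split => //; split.
  move=> j; exists (d 0 j *: row j V); split; last exact: rowH.
  move=> k; rewrite [X in _ <= X]mxE; apply: mulr_ge0; first exact: ltW (d0 j).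
  by rewrite mxE.
move=> j k [Vjk Vjs].
have rowjV : row j V = V j k *: delta_mx 0 k.
  apply/rowP => s; rewrite !mxE /=; case: (eqVneq s k) => [->|ne].
    by rewrite mulr1.
  by rewrite Vjs // mulr0.
have E1 : row j H = (d 0 j * V j k) *: row k L.
  by rewrite rowH rowjV scalerA -scalemxAl -rowE.
exists k; split.
  exists (d 0 j * V j k); split => //; apply: mulr_ge0; exact: ltW.
move=> k' [a [a0 Ea]].
apply/eqP; apply/negPn/negP => ne.
have : (((d 0 j * V j k) *: delta_mx 0 k - a *: delta_mx 0 k' : 'rV[R]_r) *m L = 0).
  by rewrite mulmxBl -!scalemxAl -!rowE -E1 -Ea subrr.
move/eqP; rewrite mulmx_free_eq0 // => /eqP/matrixP/(_ 0 k).
rewrite !mxE !eqxx /= (negbTE ne) mulr0 subr0 mulr1 => /eqP.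
by rewrite mulf_eq0 invr_eq0 !gt_eqF ?sqrtr_gt0.
Qed.
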